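(* Let $\mathfrak v_r$ be a $C(r)$-module and let $\mathfrak v_m$ be a $C(m)$-module with $m\equiv 0\pmod 4$ (both with compatible inner products). Then $\mathfrak v_m\otimes\mathfrak v_r$ is a $C(m+r)$-module with Clifford action $$J_{(z,w)}=J_z\otimes \mathrm{Id}+K_m\otimes J_w,\qquad (z,w)\in\mathbb R^m\times\mathbb R^r=\mathbb R^{m+r},$$ and the corresponding Lie algebra of Heisenberg type $(\mathfrak v_m\otimes\mathfrak v_r)\oplus(\mathbb R^m\times\mathbb R^r)$ has bracket $$[x\otimes u,\,y\otimes v]=\big(\langle u,v\rangle[x,y],\ \langle K_mx,y\rangle[u,v]\big),\qquad x,y\in\mathfrak v_m,\ u,v\in\mathfrak v_r .$$
   Context: $C(k)$ is the real Clifford algebra of $\mathbb R^k$ with relations $z^2=-\langle z,z\rangle 1$; a $C(k)$-module $\mathfrak w$ comes with an inner product for which each $J_z$ ($z\in\mathbb R^k$, acting on $\mathfrak w$) is skew-symmetric. The associated Lie algebra of Heisenberg type is $\mathfrak w\oplus\mathbb R^k$ with $\mathbb R^k$ central and bracket on $\mathfrak w$ given by $\langle z,[u,v]\rangle=\langle J_zu,v\rangle$. For a fixed orthonormal basis $z_1,\dots,z_m$ of $\mathbb R^m$, $K_m=J_{z_1}\cdots J_{z_m}$. The inner product on $\mathfrak v_m\otimes\mathfrak v_r$ is the tensor product inner product. *)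

(* Defs.v *)
From mathcomp Require Import all_boot all_order all_algebra.
From mathcomp Require Export mxtens.
Set Implicit Arguments. Unset Strict Implicit. Unset Printing Implicit Defensive.
Import Order.TTheory GRing.Theory Num.Theory.
Local Open Scope ring_scope.

(* A finite-dimensional real inner-product space is modelled as R^n (column
   vectors 'cV_n) with inner product <x,y>_G = x^T G y for a Gram matrix G. *)
Definition ip {R : realFieldType} {n : nat} (G : 'M[R]_n) (x y : 'cV[R]_n) : R :=
  (x^T *m G *m y) 0 0.

Definition is_inner_product {R : realFieldType} {n : nat} (G : 'M[R]_n) : Prop :=
  G^T = G /\ forall x : 'cV[R]_n, x != 0 -> 0 < ip G x x.

(* Standard inner product on R^k (row vectors 'rV_k); the delta vectors
   delta_mx 0 i form the fixed orthonormal basis z_1,...,z_k. *)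
Definition stdip {R : realFieldType} {k : nat} (z w : 'rV[R]_k) : R :=
  (z *m w^T) 0 0.

Definition is_Cmodule {R : realFieldType} {k n : nat}
    (G : 'M[R]_n) (J : 'rV[R]_k -> 'M[R]_n) : Prop :=
  [/\ is_inner_product G,
      (forall (a : R) (z w : 'rV[R]_k), J (a *: z + w) = a *: J z + J w),
      (forall z, J z *m J z = - stdip z z *: 1%:M) &
      (forall z (x y : 'cV[R]_n), ip G (J z *m x) y = - ip G x (J z *m y))].

Definition Kprod {R : realFieldType} {m n : nat} (J : 'rV[R]_m -> 'M[R]_n) : 'M[R]_n :=
  \big[mulmx/1%:M]_(i < m) J (delta_mx 0 i).

(* Bracket of the Heisenberg-type Lie algebra on v = R^n: the vector [x,y] in R^k
   with <z,[x,y]> = <J_z x, y>; its i-th coordinate is <J_{z_i} x, y>. *)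
Definition bracket {R : realFieldType} {k n : nat} (G : 'M[R]_n)
    (J : 'rV[R]_k -> 'M[R]_n) (x y : 'cV[R]_n) : 'rV[R]_k :=
  \row_i ip G (J (delta_mx 0 i) *m x) y.

(* Clifford action on v_m (x) v_r: J_(z,w) = J_z (x) Id + K_m (x) J_w, where
   R^m x R^r = R^(m+r) via row_mx z w (so z = lsubmx, w = rsubmx). *)
Definition tens_action {R : realFieldType} {m r nm nr : nat}
    (Jm : 'rV[R]_m -> 'M[R]_nm) (Jr : 'rV[R]_r -> 'M[R]_nr)
    (zw : 'rV[R]_(m + r)) : 'M[R]_(nm * nr) :=
  Jm (lsubmx zw) *t (1%:M : 'M[R]_nr) + Kprod Jm *t Jr (rsubmx zw).

(* Main.v *)
From HB Require Import structures.
Require Import Defs.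
From mathcomp Require Import all_boot all_order all_algebra.
From mathcomp Require Import mxtens ring zify.
Import Order.TTheory GRing.Theory Num.Theory.
Local Open Scope ring_scope.
Section Aux.
Variable R : realFieldType.

Lemma tensmxDl m n p q (A B : 'M[R]_(m,n)) (C : 'M[R]_(p,q)) :
  (A + B) *t C = A *t C + B *t C.
Proof. by apply/matrixP=> i j; rewrite !mxE mulrDl. Qed.
Lemma tensmxDr m n p q (A : 'M[R]_(m,n)) (B C : 'M[R]_(p,q)) :
  A *t (B + C) = A *t B + A *t C.
Proof. by apply/matrixP=> i j; rewrite !mxE mulrDr. Qed.
Lemma tensmxZl m n p q (a : R) (A : 'M[R]_(m,n)) (C : 'M[R]_(p,q)) :
  (a *: A) *t C = a *: (A *t C).
Proof. by apply/matrixP=> i j; rewrite !mxE mulrA. Qed.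
Lemma tensmxZr m n p q (a : R) (A : 'M[R]_(m,n)) (C : 'M[R]_(p,q)) :
  A *t (a *: C) = a *: (A *t C).
Proof. by apply/matrixP=> i j; rewrite !mxE mulrCA. Qed.
Lemma tensmxNl m n p q (A : 'M[R]_(m,n)) (C : 'M[R]_(p,q)) :
  (- A) *t C = - (A *t C).
Proof. by apply/matrixP=> i j; rewrite !mxE mulNr. Qed.
Lemma tensmxNr m n p q (A : 'M[R]_(m,n)) (C : 'M[R]_(p,q)) :
  A *t (- C) = - (A *t C).
Proof. by apply/matrixP=> i j; rewrite !mxE mulrN. Qed.
Lemma tens11 m n : (1%:M : 'M[R]_m) *t (1%:M : 'M[R]_n) = 1%:M.
Proof.
apply/matrixP=> i j.
case: (mxtens_indexP i)=> i0 i1; case: (mxtens_indexP j)=> j0 j1.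
rewrite tensmxE !mxE (inj_eq (can_inj (@mxtens_indexK m n))) xpair_eqE.
by case: (i0 == j0); case: (i1 == j1); rewrite ?mulr1 ?mulr0 ?mul0r.
Qed.
Lemma tens_entry00 (A B : 'M[R]_1) : (A *t B) 0 0 = A 0 0 * B 0 0.
Proof.
rewrite !mxE; congr (A _ _ * B _ _); apply/val_inj => //=.
Qed.

Lemma ip_tens n1 n2 (A : 'M[R]_n1) (B : 'M[R]_n2) (x y : 'cV[R]_n1) (u v : 'cV[R]_n2) :
  ip (A *t B) (x *t u) (y *t v) = ip A x y * ip B u v.
Proof.
have e : (x *t u : 'cV_(n1 * n2))^T = x^T *t u^T by apply/matrixP => i j; rewrite !mxE.
rewrite /ip e. rewrite (tensmx_mul x^T u^T A B). rewrite (tensmx_mul (x^T *m A) (u^T *m B) y v).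
exact: tens_entry00.
Qed.

Lemma mx_bilin_eq n (A B : 'M[R]_n) :
  (forall x y : 'cV[R]_n, (x^T *m A *m y) 0 0 = (x^T *m B *m y) 0 0) -> A = B.
Proof.
move=> H; apply/matrixP=> i j; have := H (delta_mx i 0) (delta_mx j 0).
by rewrite trmx_delta -!rowE -!colE !mxE.
Qed.

Definition diagpos {n} (D : 'M[R]_n) :=
  (forall i j, i != j -> D i j = 0) /\ (forall i, 0 < D i i).

Definition PD {n} (G : 'M[R]_n) := forall x : 'cV[R]_n, x != 0 -> 0 < ip G x x.

Lemma diagpos_form n (D : 'M[R]_n) (y : 'cV[R]_n) :
  diagpos D -> y != 0 -> 0 < ip D y y.
Proof.
move=> [Hoff Hdiag] y0.
have ->: ip D y y = \sum_j y j 0 * D j j * y j 0.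
  rewrite /ip mxE; apply: eq_bigr => j _; congr (_ * _).
  rewrite mxE (bigD1 j) //= big1 ?addr0 ?mxE // => k kj.
  by rewrite Hoff ?mulr0.
have [i Hi] : exists i, y i 0 != 0.
  case: (pickP (fun i => y i 0 != 0)) => [i Hi|H]; first by exists i.
  case/negP: y0; apply/eqP/matrixP => i j; rewrite ord1 mxE.
  by move/negbFE: (H i) => /eqP.
rewrite (bigD1 i) //= ltr_pwDl //.
  rewrite -mulrA mulrC -mulrA mulr_gt0 // -expr2 lt_def sqrf_eq0 Hi sqr_ge0 //.
by apply: sumr_ge0 => j _; rewrite -mulrA mulrCA mulr_ge0 // ?(ltW (Hdiag j)) // -expr2 sqr_ge0.
Qed.

Definition Diagonalizable {n} (G : 'M[R]_n) :=
  exists P : 'M[R]_n, P \in unitmx /\ diagpos (P^T *m G *m P).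

Lemma diag_step n (a : R) (b : 'cV[R]_n) (C : 'M[R]_n) :
  (forall G : 'M[R]_n, G^T = G -> PD G -> Diagonalizable G) ->
  C^T = C -> PD (block_mx a%:M b^T b C : 'M_(1 + n)) ->
  Diagonalizable (block_mx a%:M b^T b C : 'M_(1 + n)).
Proof.
move=> IH sC pG; set G := block_mx _ _ _ _.
have ha : 0 < a.
  have nz : (col_mx 1%:M 0 : 'cV[R]_(1 + n)) != 0.
    rewrite col_mx_eq0 negb_and; apply/orP; left; apply/eqP.
    by move/(congr1 (fun M : 'M[R]_1 => M 0 0)); rewrite !mxE /= => /eqP; rewrite oner_eq0.
  have := pG _ nz; rewrite /ip /G tr_col_mx trmx1 trmx0 mul_row_block.
  by rewrite !mul1mx !mul0mx !addr0 mul_row_col mulmx1 mulmx0 addr0 mxE /= mulr1n.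
set S := C - a^-1 *: (b *m b^T).
set E : 'M[R]_(1 + n) := block_mx 1%:M (- a^-1 *: b^T) 0 1%:M.
have hE : E^T *m G *m E = block_mx a%:M 0 0 S.
  rewrite /E /G tr_block_mx !trmx1 trmx0 !mulmx_block.
  rewrite !mul1mx !mul0mx !mulmx0 !mulmx1 ?addr0 ?add0r.
  have tb : (- a^-1 *: b^T)^T = - a^-1 *: b by apply/matrixP=> i j; rewrite !mxE.
  have a0 : a != 0 by rewrite gt_eqF.
  rewrite tb mul_mx_scalar mul_scalar_mx !scalerA mulrN mulfV //.
  rewrite !scaleN1r !addNr mul0mx add0r -scalemxAl scaleNr addrC //.
have Eu : E \in unitmx by rewrite unitmxE det_ublock !det1 mulr1 unitr1.
have sS : S^T = S by rewrite /S linearB /= linearZ /= trmx_mul trmxK sC.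
have pS : PD S.
  move=> y y0.
  have x0 : E *m col_mx 0 y != 0.
    apply: contra y0 => /eqP h.
    have : invmx E *m (E *m col_mx 0 y) = 0 by rewrite h mulmx0.
    by rewrite mulmxA mulVmx // mul1mx => /eqP; rewrite col_mx_eq0 => /andP[].
  have := pG _ x0; rewrite /ip trmx_mul !mulmxA -(mulmxA _ E^T) -(mulmxA _ (E^T *m G)) hE.
  rewrite tr_col_mx trmx0 mul_row_block !mulmx0 !addr0 mul_mx_scalar scaler0 add0r mul_row_col.
  by rewrite mulmx0 add0r.
have [P' [P'u [Hoff Hdiag]]] := IH S sS pS.
exists (E *m block_mx 1%:M 0 0 P'); split.
  by rewrite unitmx_mul Eu unitmxE det_ublock det1 mul1r -unitmxE.
have -> : (E *m block_mx 1%:M 0 0 P')^T *m G *m (E *m block_mx 1%:M 0 0 P')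
   = block_mx a%:M 0 0 (P'^T *m S *m P').
  rewrite trmx_mul !mulmxA -(mulmxA _ E^T) -(mulmxA _ (E^T *m G)) hE.
  rewrite tr_block_mx !trmx1 !trmx0 !mulmx_block.
  by rewrite !mul1mx !mul0mx !mulmx0 !mulmx1 ?addr0 ?add0r (mul0mx _ P').
split.
  move=> i j; case: (split_ordP i) => i' ->; case: (split_ordP j) => j' -> ij.
  - by rewrite block_mxEul !ord1 eqxx in ij *.
  - by rewrite block_mxEur mxE.
  - by rewrite block_mxEdl mxE.
  - by rewrite block_mxEdr Hoff //; apply: contra ij => /eqP ->.
move=> i; case: (split_ordP i) => i' ->.
  by rewrite block_mxEul mxE eqxx mulr1n.
by rewrite block_mxEdr.
Qed.

Lemma diagonalize n (G : 'M[R]_n) : G^T = G -> PD G -> Diagonalizable G.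
Proof.
elim: n G => [|n IH] G sG pG.
  by exists 1%:M; split; [exact: unitmx1| split; case].
pose G1 : 'M[R]_(1 + n) := G.
have eG : G1 = block_mx (ulsubmx G1 0 0)%:M (dlsubmx G1)^T (dlsubmx G1) (drsubmx G1).
  rewrite -(mx11_scalar (ulsubmx G1)) trmx_dlsub.
  by rewrite [G1^T]sG submxK.
have sC : (drsubmx G1)^T = drsubmx G1 by rewrite trmx_drsub [G1^T]sG.
have := @diag_step n (ulsubmx G1 0 0) (dlsubmx G1) (drsubmx G1) (IH) sC.
rewrite -eG; exact.
Qed.

Lemma ip_mul n (G M : 'M[R]_n) (y : 'cV[R]_n) : ip G (M *m y) (M *m y) = ip (M^T *m G *m M) y y.
Proof. by rewrite /ip trmx_mul !mulmxA. Qed.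

Lemma diagpos_tens n1 n2 (D1 : 'M[R]_n1) (D2 : 'M[R]_n2) :
  diagpos D1 -> diagpos D2 -> diagpos (D1 *t D2).
Proof.
move=> [o1 d1] [o2 d2]; split.
  move=> i j; case: (mxtens_indexP i)=> i0 i1; case: (mxtens_indexP j)=> j0 j1.
  rewrite (inj_eq (can_inj (@mxtens_indexK n1 n2))) xpair_eqE negb_and tensmxE.
  by case/orP => [/o1 ->|/o2 ->]; rewrite ?mul0r ?mulr0.
move=> i; case: (mxtens_indexP i)=> i0 i1.
by rewrite tensmxE mulr_gt0.
Qed.

Lemma PD_tens n1 n2 (A : 'M[R]_n1) (B : 'M[R]_n2) :
  A^T = A -> PD A -> B^T = B -> PD B -> PD (A *t B).
Proof.
move=> sA pA sB pB.
have [P [Pu dP]] := @diagonalize _ A sA pA.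
have [Q [Qu dQ]] := @diagonalize _ B sB pB.
move=> x x0.
set y := (invmx P *t invmx Q) *m x.
have ex : x = (P *t Q) *m y by rewrite /y mulmxA tensmx_mul !mulmxV // tens11 mul1mx.
have y0 : y != 0 by apply: contra x0 => /eqP y0; rewrite ex y0 mulmx0.
rewrite ex ip_mul trmx_tens !tensmx_mul.
apply: (@diagpos_form _ (P^T *m A *m P *t (Q^T *m B *m Q))) => //. exact: diagpos_tens.
Qed.
End Aux.

Lemma skew_mx (R : realFieldType) n (G M : 'M[R]_n) :
  (forall x y, ip G (M *m x) y = - ip G x (M *m y)) -> M^T *m G = - (G *m M).
Proof.
move=> H; apply: mx_bilin_eq => x y; have := H x y.
rewrite /ip trmx_mul !mulmxA => ->; by rewrite mulmxN mulNmx [RHS]mxE !mulmxA.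
Qed.

Lemma mx_skew (R : realFieldType) n (G M : 'M[R]_n) :
  M^T *m G = - (G *m M) -> (forall x y, ip G (M *m x) y = - ip G x (M *m y)).
Proof.
move=> H x y; rewrite /ip trmx_mul !mulmxA -(mulmxA x^T) H.
by rewrite mulmxN mulNmx mxE !mulmxA.
Qed.

Section Cliff.
Variables (R : realFieldType) (m n : nat) (G : 'M[R]_n) (J : 'rV[R]_m -> 'M[R]_n).
Hypotheses (Hlin : forall (a : R) z w, J (a *: z + w) = a *: J z + J w)
  (Hsq : forall z, J z *m J z = - stdip z z *: 1%:M)
  (Hsk : forall z x y, ip G (J z *m x) y = - ip G x (J z *m y)).

HB.instance Definition _ := Monoid.isLaw.Build 'M[R]_n 1%:M (@mulmx R n n n)
  (@mulmxA R n n n n) (@mul1mx R n n) (@mulmx1 R n n).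

Lemma J0 : J 0 = 0.
Proof.
have := Hlin 1 0 0; rewrite !scale1r addr0.
by move/(congr1 (fun M => M - J 0)); rewrite addrK subrr => ->.
Qed.
Lemma JD z w : J (z + w) = J z + J w.
Proof. by have := Hlin 1 z w; rewrite !scale1r. Qed.
Lemma JZ a z : J (a *: z) = a *: J z.
Proof. by rewrite -[a *: z]addr0 Hlin J0 addr0. Qed.
Lemma Jsum I (r : seq I) (P : pred I) F :
  J (\sum_(i <- r | P i) F i) = \sum_(i <- r | P i) J (F i).
Proof. exact: (big_morph J JD J0). Qed.

Lemma Jpolar z w : J z *m J w + J w *m J z = - (stdip z w + stdip w z) *: 1%:M.
Proof.
have h := Hsq (z + w).
rewrite JD mulmxDl !mulmxDr !Hsq in h.
have e : stdip (z + w) (z + w) = stdip z z + stdip w w + (stdip z w + stdip w z).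
  by rewrite /stdip linearD /= mulmxDl !mulmxDr !mxE; ring.
rewrite e in h.
apply: (@addrI _ (- stdip z z *: 1%:M + - stdip w w *: 1%:M)).
rewrite addrACA [- stdip w w *: _ + _]addrC h -!scalerDl; congr (_ *: _); ring.
Qed.


Definition d (i : nat) : 'rV[R]_m := \row_j ((j == i :> nat)%:R).
Definition e i := J (d i).
Definition P k := \big[mulmx/1%:M]_(0 <= i < k) e i.

Lemma d_ord (i : 'I_m) : d i = delta_mx 0 i.
Proof. by apply/rowP => k; rewrite !mxE. Qed.

Lemma stdip_d i j : (i < m)%N -> (j < m)%N -> stdip (d i) (d j) = (i == j)%:R.
Proof.
move=> hi hj.
rewrite -[i]/(val (Ordinal hi)) -[j]/(val (Ordinal hj)) !d_ord /stdip trmx_delta.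
by rewrite mul_delta_mx_cond -val_eqE /=; case: (i == j); rewrite ?mulr0n ?mulr1n !mxE ?eqxx.
Qed.

Lemma e_sq i : (i < m)%N -> e i *m e i = - 1%:M.
Proof. by move=> hi; rewrite /e Hsq stdip_d // eqxx scaleN1r. Qed.

Lemma e_anti i j : (i < m)%N -> (j < m)%N -> i != j -> e i *m e j = - (e j *m e i).
Proof.
move=> hi hj ij; apply/eqP; rewrite -subr_eq0 opprK.
have ji : (j == i) = false by rewrite eq_sym (negbTE ij).
by rewrite /e Jpolar !stdip_d // (negbTE ij) ji addr0 oppr0 scale0r.
Qed.

Lemma P0 : P 0 = 1%:M.
Proof. by rewrite /P big_geq. Qed.
Lemma PS k : P k.+1 = P k *m e k.
Proof. by rewrite /P big_nat_recr. Qed.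

Lemma KP : Kprod J = P m.
Proof.
by rewrite /P big_mkord /Kprod; apply: eq_bigr => i _; rewrite /e d_ord.
Qed.

Lemma ecomm j k : (j < m)%N -> (k <= m)%N -> e j *m P k = (-1) ^+ (k + (j < k))%N *: (P k *m e j).
Proof.
move=> hj; elim: k => [|k IH] hk.
  by rewrite P0 mul1mx mulmx1 ltn0 addn0 expr0 scale1r.
rewrite PS mulmxA IH; last exact: ltnW.
rewrite -scalemxAl -!mulmxA.
case: (eqVneq j k) => [->|jk].
  by rewrite ltnn ltnSn addn0 addn1 !exprS !mulN1r opprK.
rewrite e_anti //.
rewrite mulmxN scalerN -scaleNr; congr (_ *: _).
by rewrite [(j < k.+1)%N]ltnS [(j <= k)%N]leq_eqVlt (negbTE jk) /= addSn exprS mulN1r.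
Qed.



Lemma sq_step k c : (k < m)%N -> P k *m P k = c *: 1%:M ->
  P k.+1 *m P k.+1 = ((-1) ^+ k.+1 * c) *: 1%:M.
Proof.
move=> hk h.
rewrite PS mulmxA -(mulmxA (P k)) (@ecomm k k hk (ltnW hk)) ltnn addn0 -scalemxAr -scalemxAl.
rewrite !mulmxA -(mulmxA _ (e k)) e_sq // h mulmxN mulmx1 scalerN -scalerA.
by rewrite -scaleNr exprS mulN1r.
Qed.

Lemma eskew k : (e k)^T *m G = - (G *m e k).
Proof. by apply: skew_mx => x y; exact: Hsk. Qed.

Lemma sym_step k c : (k < m)%N -> (P k)^T *m G = c *: (G *m P k) ->
  (P k.+1)^T *m G = ((-1) ^+ k.+1 * c) *: (G *m P k.+1).
Proof.
move=> hk h.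
rewrite PS trmx_mul -mulmxA h -scalemxAr (mulmxA (e k)^T) eskew mulNmx -mulmxA (@ecomm k k hk (ltnW hk)).
rewrite ltnn addn0 -scalemxAr mulmxA scalerN -scaleNr scalerA exprS mulN1r.
by congr (_ *: _); ring.
Qed.

Lemma sign4 k c : (-1) ^+ k.+4 * ((-1) ^+ k.+3 * ((-1) ^+ k.+2 * ((-1) ^+ k.+1 * c))) = c :> R.
Proof.
have hx : (-1) ^+ k * (-1) ^+ k = 1 :> R.
  by rewrite -exprMn mulrNN mulr1 expr1n.
transitivity (((-1) ^+ k * (-1) ^+ k) * ((-1) ^+ k * (-1) ^+ k) * c).
  by rewrite !exprS; ring.
by rewrite hx !mul1r.
Qed.

Lemma P4 t : (4 * t <= m)%N -> P (4 * t) *m P (4 * t) = 1%:M /\ (P (4 * t))^T *m G = G *m P (4 * t).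
Proof.
elim: t => [|t IH] ht.
  by rewrite muln0 P0 mulmx1 trmx1 mul1mx mulmx1.
have e4 : (4 * t.+1 = (4 * t).+4)%N by rewrite mulnS !addSn add0n.
rewrite e4 in ht *; set k := (4 * t)%N in ht *.
have [h1 h2] := IH (leq_trans (leq_addl 4 k) (leq_trans (leqnn _) ht)).
have l0 : (k < m)%N by lia.
have {}h1 : P k *m P k = 1 *: 1%:M by rewrite scale1r.
have {}h2 : (P k)^T *m G = 1 *: (G *m P k) by rewrite scale1r.
have l1 : (k.+1 < m)%N by lia.
have l2 : (k.+2 < m)%N by lia.
have l3 : (k.+3 < m)%N by lia.
split.
  have q := @sq_step _ _ l3 (@sq_step _ _ l2 (@sq_step _ _ l1 (@sq_step _ _ l0 h1))).
  by rewrite sign4 scale1r in q.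
have q := @sym_step _ _ l3 (@sym_step _ _ l2 (@sym_step _ _ l1 (@sym_step _ _ l0 h2))).
by rewrite sign4 scale1r in q.
Qed.

Lemma K_props : (m %% 4 = 0)%N ->
  [/\ Kprod J *m Kprod J = 1%:M, (Kprod J)^T *m G = G *m Kprod J &
      forall z, J z *m Kprod J = - (Kprod J *m J z)].
Proof.
move=> m4.
have em : m = (4 * (m %/ 4))%N by rewrite {1}(divn_eq m 4) m4 addn0 mulnC.
have [h1 h2] := @P4 (m %/ 4) (eq_leq (esym em)).
rewrite -em in h1 h2; rewrite KP; split => //.
move=> z.
rewrite (row_sum_delta z) Jsum mulmx_suml mulmx_sumr -sumrN; apply: eq_bigr => j _.
rewrite JZ -!scalemxAl -scalemxAr -scalerN; congr (_ *: _).
rewrite -d_ord -/(e j) (@ecomm j m (ltn_ord j) (leqnn m)) (ltn_ord j) addn1 exprS.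
have sm : (-1) ^+ m = 1 :> R by rewrite em -signr_odd oddM /= expr0.
by rewrite sm mulr1 scaleN1r.
Qed.


End Cliff.

Lemma stdip_split (R : realFieldType) m r (zw : 'rV[R]_(m + r)) :
  stdip zw zw = stdip (lsubmx zw) (lsubmx zw) + stdip (rsubmx zw) (rsubmx zw).
Proof. by rewrite /stdip -{1 2}[zw]hsubmxK tr_row_mx mul_row_col mxE. Qed.

Theorem proposition4p3 (R : realFieldType) (m r nm nr : nat)
    (Gm : 'M[R]_nm) (Jm : 'rV[R]_m -> 'M[R]_nm)
    (Gr : 'M[R]_nr) (Jr : 'rV[R]_r -> 'M[R]_nr) :
  (m %% 4 = 0)%N ->
  is_Cmodule Gm Jm ->
  is_Cmodule Gr Jr ->
  is_Cmodule (Gm *t Gr) (tens_action Jm Jr) /\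
  (forall (x y : 'cV[R]_nm) (u v : 'cV[R]_nr),
     bracket (Gm *t Gr) (tens_action Jm Jr) (x *t u) (y *t v)
     = row_mx (ip Gr u v *: bracket Gm Jm x y)
              (ip Gm (Kprod Jm *m x) y *: bracket Gr Jr u v)).
Proof.
move=> m4 [[sGm pGm] Lm Sqm Skm] [[sGr pGr] Lr Sqr Skr].
have [K2 Ksym KJ] := @K_props _ _ _ Gm Jm Lm Sqm Skm m4.
have Jm0 := @J0 _ _ _ Jm Lm; have Jr0 := @J0 _ _ _ Jr Lr.
split.
  split.
  - split; first by rewrite trmx_tens sGm sGr.
    exact: PD_tens.
  - move=> a z w; rewrite /tens_action.
    have hl : lsubmx (a *: z + w) = a *: lsubmx z + lsubmx w by apply/matrixP => i j; rewrite !mxE.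
    have hr : rsubmx (a *: z + w) = a *: rsubmx z + rsubmx w by apply/matrixP => i j; rewrite !mxE.
    rewrite hl hr Lm Lr tensmxDl tensmxZl tensmxDr tensmxZr scalerDr addrACA //.
  - move=> zw; rewrite stdip_split /tens_action.
    set z := lsubmx zw; set w := rsubmx zw; set K := Kprod Jm.
    have KJ' : K *m Jm z = - (Jm z *m K) by rewrite KJ opprK.
    rewrite mulmxDl !mulmxDr !tensmx_mul !mul1mx !mulmx1 Sqm Sqr K2 KJ' tensmxNl.
    rewrite addrA addrK tensmxZl tensmxZr tens11 -scalerDl; congr (_ *: _).
    by rewrite opprD.
  - move=> zw; apply: mx_skew; rewrite /tens_action.
    set z := lsubmx zw; set w := rsubmx zw; set K := Kprod Jm.
    rewrite linearD /= !trmx_tens trmx1 mulmxDl !tensmx_mul mul1mx.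
    rewrite (@skew_mx _ _ _ _ (Skm z)) (@skew_mx _ _ _ _ (Skr w)) Ksym mulmxDr !tensmx_mul mulmx1.
    by rewrite tensmxNl tensmxNr opprD.
move=> x y u v; apply/rowP => i; rewrite mxE.
case: (split_ordP i) => k ->; rewrite ?row_mxEl ?row_mxEr !mxE /tens_action.
  rewrite delta_mx_lshift row_mxKl row_mxKr Jr0 tensmx0 addr0.
  have e1 : (Jm 'e_k *t 1%:M) *m (x *t u : 'cV_(nm * nr)) = (Jm 'e_k *m x) *t (1%:M *m u)
    := tensmx_mul (Jm 'e_k) 1%:M x u.
  by rewrite e1 mul1mx ip_tens mulrC.
rewrite delta_mx_rshift row_mxKl row_mxKr Jm0 tens0mx add0r.
have e1 : (Kprod Jm *t Jr 'e_k) *m (x *t u : 'cV_(nm * nr)) = (Kprod Jm *m x) *t (Jr 'e_k *m u)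
  := tensmx_mul (Kprod Jm) (Jr 'e_k) x u.
by rewrite e1 ip_tens.
Qed.
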